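(* Let $k\ge 1$ and let $m,N$ be integers with $N\ge 3$, $m\ge 1$, $\gcd(m,N)=1$, such that $e^{2\pi i m/N}$ is a root of $Q_{k-1}(q)$. Then $\gcd(N,4k+1)\in\{1,3\}$. In particular, if $k\not\equiv 2\pmod 3$, then $\gcd(N,4k+1)=1$.
   Context: $Q_{k-1}(q)=q^{4k+4}-q^{4k+3}-q^{4k+2}-q^{4k+1}+q^3+q^2+q-1=(q^4-1)P_{k-1}(q)$, where $P_{k-1}(q)=1+\sum_{l=1}^{k} q^{4l-4}(q^4-q^3-q^2-q)$. *)

(* Defs.v *)
From HB Require Import structures.
From mathcomp Require Import all_boot all_order all_algebra all_field.
Set Implicit Arguments. Unset Strict Implicit. Unset Printing Implicit Defensive.
Import Order.TTheory GRing.Theory Num.Theory.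
Local Open Scope ring_scope.

Definition Qpoly (j : nat) : {poly algC} :=
  'X^(4 * j + 8) - 'X^(4 * j + 7) - 'X^(4 * j + 6) - 'X^(4 * j + 5)
  + 'X^3 + 'X^2 + 'X - 1.

(* e^{2 pi i m / N} in algC.  N.-root (-1) is the N-th root of -1 of minimal
   nonnegative argument, i.e. e^{i pi / N} (for N > 0); hence its (2m)-th power
   is e^{2 pi i m / N}. *)
Definition expi2pi (m N : nat) : algC := (N.-root (-1)) ^+ (2 * m).

(* Main.v *)
Require Import Defs.
From HB Require Import structures.
From mathcomp Require Import all_boot all_order all_algebra all_field.
From Stdlib Require Import Lia.
Import Order.TTheory GRing.Theory Num.Theory.

Lemma cop_of c r e t : prime r -> 0 < e -> ~~ (r %| 1 + c*t) -> coprime (1 + c*t) (c * r ^ e).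
Proof.
move=> pr e0 nd; rewrite coprimeMr coprime_pexpr //; apply/andP; split.
  by rewrite coprime_sym /coprime addnC mulnC gcdnMDl gcdn1.
by rewrite coprime_sym prime_coprime.
Qed.

Lemma two_bad p c s t : prime p -> s < t -> t - s < p -> p %| 1 + c*s -> p %| 1 + c*t -> False.
Proof.
move=> pr st tp ds dt.
have : p %| c * (t - s).
  by rewrite mulnBr; have := dvdn_sub dt ds; rewrite subnDl.
rewrite Euclid_dvdM // => /orP[pc|pts].
  move: ds; rewrite dvdn_addl ?dvdn_mulr // dvdn1 => /eqP p1.
  by move: pr; rewrite p1.
have := dvdn_leq _ pts; rewrite subn_gt0 st => /(_ isT) le.
by move: tp; rewrite ltnNge le.
Qed.

Lemma mod3 k : 3 %| 4 * k + 1 -> k %% 3 = 2.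
Proof.
rewrite (_ : 4 * k + 1 = (k %% 3).+1 + 3 * (k %/ 3 + k)); last first.
  move: (divn_eq k 3); rewrite -!plusE -!multE; lia.
rewrite dvdn_addl ?dvdn_mulr //.
have : k %% 3 < 3 by rewrite ltn_mod.
by case: (k %% 3) => [|[|[|]]].
Qed.

Local Open Scope ring_scope.

Lemma cubic4 (y : algC) (xs : seq algC) :
  uniq xs -> (size xs = 4)%N ->
  all (fun x => y * x ^+ 3 - y * x ^+ 2 - y * x - y + x ^+ 3 + x ^+ 2 + x - 1 == 0) xs -> False.
Proof.
move=> uq sz allr.
pose p : {poly algC} := y *: ('X^3 - 'X^2 - 'X - 1) + ('X^3 + 'X^2 + 'X - 1).
have c3 : p`_3 = y + 1 by rewrite !coefE /= !subr0 mulr1 !addr0.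
have c2 : p`_2 = 1 - y by rewrite !coefE /= !subr0 sub0r add0r mulrN1 addr0 addrC.
have p0 : p != 0.
  apply/eqP=> p0; move: c3 c2; rewrite p0 !coef0 => /eqP; rewrite eq_sym addr_eq0 => /eqP ->.
  move/eqP; rewrite opprK eq_sym -(natrD _ 1 1) pnatr_eq0 //.
have szp : (size p <= 4)%N.
  apply/leq_sizeP => j hj; rewrite !coefE.
  case: j hj => [|[|[|[|j]]]] // _ /=.
  by rewrite !subr0 !addr0 mulr0.
have := @max_poly_roots _ p xs p0.
rewrite sz.
have -> : all (root p) xs.
  apply/allP=> x xin; move/allP: allr => /(_ x xin) H.
  rewrite /root /p !hornerE.
  by rewrite !mulrBr mulr1.
move=> H; have H2 := H isT uq; clear H.
by have := leq_ltn_trans szp H2; rewrite ltnn.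
Qed.

Lemma core (k N c d : nat) (q : algC) (ts : seq nat) :
  N.-primitive_root q -> N = (c * d)%N -> (d %| 4*k+1)%N ->
  q ^+ (4*k+4) - q ^+ (4*k+3) - q ^+ (4*k+2) - q ^+ (4*k+1) + q ^+ 3 + q ^+ 2 + q - 1 = 0 ->
  uniq ts -> size ts = 4%N -> all (fun t => (t < d)%N && coprime (1 + c*t) N) ts -> False.
Proof.
move=> prim NE dd H uq sz allt.
have N0 := prim_order_gt0 prim.
have c0 : (0 < c)%N by move: N0; rewrite NE muln_gt0 => /andP[].
have qN := prim_expr_order prim.
set y := q ^+ (4*k+1).
apply: (@cubic4 y (map (fun t => q ^+ (1 + c*t)) ts)).
- rewrite map_inj_in_uniq // => s t sin tin.
  move/allP: allt => al; move: (al s sin) (al t tin) => /andP[sd _] /andP[td _].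
  move/eqP; rewrite (eq_prim_root_expr prim) eqn_modDl NE -!muln_modr.
  by rewrite eqn_pmul2l // !modn_small // => /eqP.
- by rewrite size_map.
apply/allP => _ /mapP[t tin ->].
move/allP: allt => /(_ t tin) /andP[td cop].
have [u hu] := Qn_aut_exists cop.
have := congr1 u H; rewrite !(rmorph0, rmorphB, rmorphD, rmorph1, rmorphXn) (hu q qN).
set x := q ^+ (1 + c*t).
have xy : x ^+ (4*k+1) = y.
  rewrite /x -exprM mulnDl mul1n exprD -/y.
  case/dvdnP: dd => e ->.
  have -> : (c * t * (e * d) = (c * d) * (t * e))%N by rewrite -!multE; lia.
  by rewrite -NE exprM qN expr1n mulr1.
have e4 : forall j, x ^+ (4*k+1+j) = y * x ^+ j by move=> j; rewrite exprD xy.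
have E4 : (4*k+4 = 4*k+1+3)%N by rewrite -addnA.
have E3 : (4*k+3 = 4*k+1+2)%N by rewrite -addnA.
have E2 : (4*k+2 = 4*k+1+1)%N by rewrite -addnA.
rewrite E4 E3 E2 !e4 xy expr1 => ->; by rewrite eqxx.
Qed.


Lemma norm_sub1 (z : algC) : `|z| = 1 -> `|z - 1| ^+ 2 = 2 - 2 * 'Re z.
Proof.
move=> nz.
have h2 : 2 * 'Re z = z + z^* by rewrite ReE mulrC divfK ?pnatr_eq0.
rewrite h2 normCK rmorphB rmorph1 mulrBr !mulrBl mul1r mulr1.
rewrite -normCK nz expr1n.
rewrite mulr1 opprB (_ : 2 = 1 + 1 :> algC); last by rewrite mulr2n.
rewrite opprD addrA (addrAC 1) -addrA; congr (_ + _); by rewrite addrC.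
Qed.

Lemma sum_geom0 (x : algC) (h : nat) : x ^+ h = 1 -> x != 1 -> \sum_(j < h) x ^+ j = 0.
Proof.
move=> xh x1; have := subrX1 x h; rewrite xh subrr => /esym/eqP.
by rewrite mulf_eq0 subr_eq0 (negbTE x1) /= => /eqP.
Qed.

Lemma norm1_of_pow (x r : algC) (h : nat) : (0 < h)%N -> `|r| = 1 -> x ^+ h = r -> `|x| = 1.
Proof.
move=> h0 nr xr; apply/eqP; rewrite -(pexpr_eq1 h0) ?normr_ge0 //.
by rewrite -normrX xr nr.
Qed.

Lemma exists_closer (r : algC) (h : nat) : (1 < h)%N -> r != 1 -> `|r| = 1 ->
  exists u, u ^+ h = r /\ 'Re r < 'Re u.
Proof.
move=> h1 r1 nr.
have h0 : (0 < h)%N by apply: ltnW.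
set u0 := h.-root r.
have u0h : u0 ^+ h = r := rootCK h0 r.
have [z pz] := C_prim_root_exists h0.
have zh := prim_expr_order pz.
pose P (x : algC) := \sum_(i < h) x ^+ i.
pose U (j : nat) := u0 * z ^+ j.
have Uh j : U j ^+ h = r by rewrite exprMn u0h exprAC zh expr1n mulr1.
have nU j : `|U j| = 1 := norm1_of_pow _ _ _ h0 nr (Uh j).
have PU j : (U j - 1) * P (U j) = r - 1 by rewrite -subrX1 Uh.
have sumP : \sum_(j < h) P (U j) = h%:R.
  rewrite /P exchange_big /= (bigD1 (Ordinal h0)) //=.
  rewrite [X in _ + X]big1 ?addr0.
    by rewrite (eq_bigr (fun _ => 1)) ?sumr_const ?card_ord // => j _; rewrite expr0.
  move=> i ni; rewrite /U.
  have i0 : (0 < i)%N by rewrite lt0n; move: ni; apply: contra => /eqP e; apply/eqP/val_inj.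
  under eq_bigr do rewrite exprMn -exprM mulnC exprM.
  rewrite -mulr_sumr sum_geom0 ?mulr0 //; first by rewrite exprAC zh expr1n.
  by rewrite -(prim_order_dvd pz) gtnNdvd.
have [j Pj] : exists j : 'I_h, 1 < `|P (U j)|.
  case: (boolP [exists j : 'I_h, 1 < `|P (U j)|]) => [/existsP//|/existsPn nall].
  have le1 (j : 'I_h) : `|P (U j)| <= 1.
    by rewrite real_leNgt ?normr_real ?rpred1 //; apply: nall.
  have Rle (j : 'I_h) : 'Re (P (U j)) <= 1 := le_trans (leif_Re_Creal _).1 (le1 j).
  have s0 : \sum_(j < h) (1 - 'Re (P (U j))) = 0.
    rewrite sumrB sumr_const card_ord -raddf_sum sumP.
    by apply/eqP; rewrite subr_eq0; apply/eqP; exact: esym (Creal_ReP _ (realn _ _)).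
  have Re1 (j : 'I_h) : 'Re (P (U j)) = 1.
    have H0 : forall i : 'I_h, true -> 0 <= 1 - 'Re (P (U i)) by move=> i _; rewrite subr_ge0.
    by have := psumr_eq0P H0 s0 (i := j) isT; move/eqP; rewrite subr_eq0 => /eqP <-.
  have P1 (j : 'I_h) : P (U j) = 1.
    have nn := normC2_Re_Im (P (U j)); rewrite Re1 expr1n in nn.
    have Im0 : 'Im (P (U j)) = 0.
      have le0 : 'Im (P (U j)) ^+ 2 <= 0.
        rewrite -(lerD2l 1) addr0 -nn exprn_ile1 ?normr_ge0 //.
      have ge0 : 0 <= 'Im (P (U j)) ^+ 2 by rewrite -realEsqr Creal_Im.
      by apply/eqP; rewrite -sqrf_eq0; apply/eqP/le_anti; rewrite le0 ge0.
    by rewrite [P (U j)]Crect Re1 Im0 mulr0 addr0.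
  have e0 := PU 0%N; have e1 := PU 1%N.
  rewrite (P1 (Ordinal h0)) (P1 (Ordinal h1)) !mulr1 in e0 e1.
  move: e1; rewrite -e0 => /addIr; rewrite /U.
  have u00 : u0 != 0 by rewrite -normr_eq0 (norm1_of_pow _ _ _ h0 nr u0h) oner_eq0.
  move/(mulfI u00)/eqP; rewrite (eq_prim_root_expr pz) !modn_small //.
have nrm : `|U j - 1| * `|P (U j)| = `|r - 1| by rewrite -normrM PU.
have B0 : 0 < `|r - 1| by rewrite normr_gt0 subr_eq0.
have A0 : 0 < `|U j - 1|.
  rewrite lt0r normr_ge0 andbT; apply/eqP => A0; move: B0; rewrite -nrm A0 mul0r ltxx //.
have AB : `|U j - 1| < `|r - 1| by rewrite -nrm ltr_pMr.
have AB2 : `|U j - 1| ^+ 2 < `|r - 1| ^+ 2 by rewrite ltrXn2r.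
move: AB2; rewrite !norm_sub1 // ltrD2l ltrN2 ltr_pM2l // => AB2.
by exists (U j).
Qed.

Lemma N1_neq1 : (-1 : algC) != 1.
Proof.
by rewrite -subr_eq0 -opprD oppr_eq0 -mulr2n pnatr_eq0.
Qed.

Lemma rootN1_prim (N : nat) : (0 < N)%N -> (2 * N).-primitive_root (N.-root (-1) : algC).
Proof.
move=> N0; set r := N.-root (-1 : algC).
have rN : r ^+ N = -1 := rootCK N0 _.
have r2N : r ^+ (2 * N) = 1 by rewrite mulnC exprM rN sqrrN expr1n.
have N20 : (0 < 2 * N)%N by rewrite muln_gt0.
have [d pd dd] := prim_order_exists N20 r2N.
case/dvdnP: dd => h Eh.
have d0 := prim_order_gt0 pd.
have [h1|hn1] := eqVneq h 1%N; first by rewrite Eh h1 mul1n.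
exfalso.
have rd := prim_expr_order pd.
have oh : odd h.
  apply: contraT; rewrite -dvdn2 => /dvdnP [h' eh].
  have NE : N = (h' * d)%N by move: Eh; rewrite eh -!multE; nia.
  by move: rN; rewrite NE mulnC exprM rd expr1n => /eqP; rewrite eq_sym (negbTE N1_neq1).
have ed : ~~ odd d.
  apply/negP => od; move: (congr1 odd Eh); by rewrite !oddM oh od.
move: ed; rewrite -dvdn2 => /dvdnP [M eM].
have NE : N = (h * M)%N by move: Eh; rewrite eM -!multE; nia.
have rM : r ^+ M = -1.
  have x2 : (r ^+ M) ^+ 2 = 1 by rewrite -exprM -eM rd.
  have xh : (r ^+ M) ^+ h = -1 by rewrite -exprM mulnC -NE rN.
  move: xh; rewrite -(odd_double_half h) oh /= exprS -muln2 mulnC exprM x2 expr1n mulr1 //.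
have nr : `|r| = 1 by apply: (norm1_of_pow _ _ _ N0 _ rN); rewrite normrN1.
have r1 : r != 1 by apply/eqP => r1; move: rN; rewrite r1 expr1n => /eqP; rewrite eq_sym (negbTE N1_neq1).
have hgt1 : (1 < h)%N.
  rewrite ltn_neqAle eq_sym hn1 /= lt0n; apply/eqP => h0; move: Eh; rewrite h0 mul0n.
  by move=> e; move: N20; rewrite e.
have [u [uh Reu]] := exists_closer r h hgt1 r1 nr.
have uN : u ^+ N = -1 by rewrite NE exprM uh rM.
have [imp|imn] := boolP (0 <= 'Im u).
  by have := rootC_Re_max N0 uN imp; rewrite -/r (lt_geF Reu).
have vN : (u^*) ^+ N = -1 by rewrite -rmorphXn uN rmorphN1.
have imv : 0 <= 'Im (u^*).
  by rewrite Im_conj oppr_ge0; apply: ltW; rewrite real_ltNge ?Creal_Im ?rpred0.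
by have := rootC_Re_max N0 vN imv; rewrite -/r Re_conj (lt_geF Reu).
Qed.

Definition Heq (k : nat) (q : algC) :=
  q ^+ (4*k+4) - q ^+ (4*k+3) - q ^+ (4*k+2) - q ^+ (4*k+1) + q ^+ 3 + q ^+ 2 + q - 1 = 0.

Lemma case_p k N q p : N.-primitive_root q -> Heq k q -> prime p -> (5 <= p)%N ->
  (p %| N)%N -> (p %| 4*k+1)%N -> False.
Proof.
move=> prim H pr p5 pN pk.
set c := (N %/ p)%N.
have NE : N = (c * p)%N by rewrite divnK.
have G t : (t < 5)%N -> ~~ (p %| 1 + c * t)%N -> (t < p)%N && coprime (1 + c*t) N.
  move=> t5 nd; rewrite (leq_trans t5 p5) /= NE.
  by have := cop_of c p 1 t pr isT nd; rewrite expn1.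
have G0 : ~~ (p %| 1 + c * 0)%N by rewrite muln0 addn0 dvdn1; apply/eqP => p1; move: pr; rewrite p1.
have tb s t : (s < t)%N -> (t < 5)%N -> (p %| 1 + c*s)%N -> ~~ (p %| 1 + c*t)%N.
  move=> st t5 ds; apply/negP => dt; apply: (two_bad _ _ _ _ pr st _ ds dt).
  by apply: leq_ltn_trans (leq_subr _ _) (leq_trans t5 p5).
have C ts := core k N c p q ts prim NE pk H.
have g s t (st : (s < t)%N) (t5 : (t < 5)%N) b := G t t5 (tb s t st t5 b).
case: (boolP (p %| 1 + c * 1)%N) => b1.
  apply: (C [:: 0; 2; 3; 4]%N) => //=.
  by rewrite (G 0%N isT G0) (g 1%N 2%N isT isT b1) (g 1%N 3%N isT isT b1) (g 1%N 4%N isT isT b1).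
case: (boolP (p %| 1 + c * 2)%N) => b2.
  apply: (C [:: 0; 1; 3; 4]%N) => //=.
  by rewrite (G 0%N isT G0) (G 1%N isT b1) (g 2%N 3%N isT isT b2) (g 2%N 4%N isT isT b2).
case: (boolP (p %| 1 + c * 3)%N) => b3.
  apply: (C [:: 0; 1; 2; 4]%N) => //=.
  by rewrite (G 0%N isT G0) (G 1%N isT b1) (G 2%N isT b2) (g 3%N 4%N isT isT b3).
apply: (C [:: 0; 1; 2; 3]%N) => //=.
by rewrite (G 0%N isT G0) (G 1%N isT b1) (G 2%N isT b2) (G 3%N isT b3).
Qed.

Lemma case_9 k N q : N.-primitive_root q -> Heq k q ->
  (9 %| N)%N -> (9 %| 4*k+1)%N -> False.
Proof.
move=> prim H pN pk.
set c := (N %/ 9)%N.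
have NE : N = (c * 9)%N by rewrite divnK.
have G t : (t < 9)%N -> ~~ (3 %| 1 + c * t)%N -> coprime (1 + c*t) N.
  move=> t9 nd; rewrite NE.
  exact: (cop_of c 3 2 t isT isT nd).
have Gm m : ~~ (3 %| 1 + c * (3 * m))%N.
  rewrite dvdn_addl //; apply: dvdn_mull; exact: dvdn_mulr.
have C ts := core k N c 9 q ts prim NE pk H.
case: (boolP (3 %| 1 + c * 1)%N) => b1.
  have b2 : ~~ (3 %| 1 + c * 2)%N.
    by apply/negP => b2; apply: (two_bad 3 c 1 2 isT isT isT b1 b2).
  apply: (C [:: 0; 2; 3; 6]%N) => //=.
  by rewrite (G 0%N isT (Gm 0%N)) (G 2%N isT b2) (G 3%N isT (Gm 1%N)) (G 6%N isT (Gm 2%N)).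
apply: (C [:: 0; 1; 3; 6]%N) => //=.
by rewrite (G 0%N isT (Gm 0%N)) (G 1%N isT b1) (G 3%N isT (Gm 1%N)) (G 6%N isT (Gm 2%N)).
Qed.

Theorem mainTheorem7 (k m N : nat) :
  (1 <= k)%N -> (3 <= N)%N -> (1 <= m)%N -> coprime m N ->
  root (Qpoly k.-1) (expi2pi m N) ->
  (gcdn N (4 * k + 1) \in [:: 1%N; 3%N]) /\
  ((k %% 3 != 2)%N -> gcdn N (4 * k + 1) = 1%N).
Proof.
move=> k1 N3 m1 cop rQ.
have N0 : (0 < N)%N by apply: leq_trans N3.
set q := expi2pi m N.
have prim : N.-primitive_root q.
  have := exp_prim_root (rootN1_prim N N0) (2 * m).
  by rewrite -muln_gcdr (eqP cop) muln1 mulKn.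
have H : Heq k q.
  have e j : (4 * k.-1 + (j + 4) = 4 * k + j)%N.
    by case: (k) k1 => // k' _ /=; rewrite -!plusE -!multE; lia.
  move: rQ; rewrite /root /Qpoly !hornerE (e 4%N) (e 3%N) (e 2%N) (e 1%N) => /eqP.
  done.
set g := gcdn N (4 * k + 1).
have gN : (g %| N)%N := dvdn_gcdl _ _.
have gk : (g %| 4 * k + 1)%N := dvdn_gcdr _ _.
have g0 : (0 < g)%N by rewrite gcdn_gt0 N0.
have P3 p : prime p -> (p %| g)%N -> p = 3%N.
  move=> pr pg; have pN := dvdn_trans pg gN; have pk := dvdn_trans pg gk.
  have [p5|p5] := leqP 5 p; first by case: (case_p k N q p prim H pr p5 pN pk).
  have p2 : p != 2%N.
    by apply/eqP => p2; move: pk; rewrite p2 dvdn2 addn1 /= oddM.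
  by move: pr p2 p5; case: (p) => [|[|[|[|[|?]]]]].
have n9 : ~~ (9 %| g)%N.
  by apply/negP => h9; apply: (case_9 k N q prim H (dvdn_trans h9 gN) (dvdn_trans h9 gk)).
have Hg : g = 1%N \/ g = 3%N.
  case: (boolP (3 %| g)%N) => [d3|nd3].
    case/dvdnP: d3 => g1 eg.
    have [g11|gn1] := eqVneq g1 1%N; first by right; rewrite eg g11.
    have g1p : (1 < g1)%N.
      rewrite ltn_neqAle eq_sym gn1 lt0n; apply/eqP => g10; move: g0; rewrite eg g10.
      by [].
    have [p0 pr0 pg1] := pdivP g1p.
    have pg : (p0 %| g)%N by rewrite eg dvdn_mulr.
    have p03 := P3 p0 pr0 pg; rewrite p03 in pg1.
    by exfalso; move/negP: n9; apply; rewrite eg; exact: (dvdn_mul pg1 (dvdnn 3)).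
  have [g1|gn1] := eqVneq g 1%N; first by left.
  have g1p : (1 < g)%N by rewrite ltn_neqAle eq_sym gn1 g0.
  have [p0 pr0 pg] := pdivP g1p.
  by move: nd3; rewrite -(P3 p0 pr0 pg) pg.
split; first by case: Hg => ->.
move=> k3; case: Hg => // g3.
have h3 : (3 %| 4 * k + 1)%N by move: gk; rewrite g3.
by move: k3; rewrite (mod3 k h3).
Qed.
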